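(* Let $\vartheta$ be a semi-compatible random substitution on $\mathcal A=\{a_1,\dots,a_n\}$ with substitution matrix $M$. Then for all integers $1\leqslant k<m$, \[ \bm q_k^\intercal M^{m-k}\;\leqslant\;\bm q_m^\intercal\;\leqslant\;\bm q_k^\intercal M^{m-k}+\bm q_{m-k}^\intercal \] component-wise.
   Context: Let $\mathcal A=\{a_1,\dots,a_n\}$ be a finite alphabet, $\mathcal A^+$ the set of finite non-empty words over $\mathcal A$, and $\mathcal F(\mathcal A^+)$ the set of finite non-empty subsets of $\mathcal A^+$. For $A,B\in\mathcal F(\mathcal A^+)$ put $AB=\{uv: u\in A, v\in B\}$. A random substitution is a map $\vartheta:\mathcal A\to\mathcal F(\mathcal A^+)$, extended to words by $\vartheta(u_1\cdots u_m)=\vartheta(u_1)\cdots\vartheta(u_m)$ and to sets by $\vartheta(A)=\bigcup_{u\in A}\vartheta(u)$; powers $\vartheta^m$ are compositions. $|u|_a$ denotes the number of occurrences of the letter $a$ in $u$ and $\Phi(u)=(|u|_{a_1},\dots,|u|_{a_n})^\intercal$. $\vartheta$ is semi-compatible if for every $a\in\mathcal A$ all words in $\vartheta(a)$ have the same Abelianisation $\Phi$. The substitution matrix is $M_{ij}=|u|_{a_i}$ for any $u\in\vartheta(a_j)$. Set $q_{m,i}=\log(\#\vartheta^m(a_i))$ and $\bm q_m=(q_{m,1},\dots,q_{m,n})^\intercal$. *)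

(* Defs.v *)
From Stdlib Require Import Reals.
From mathcomp Require Import all_boot.
Set Implicit Arguments. Unset Strict Implicit. Unset Printing Implicit Defensive.

(* Alphabet A = {a_1,...,a_n} is 'I_n; words are seq 'I_n.
   A finite set of words is represented by a list (membership = set),
   its cardinality is the number of distinct entries. *)
Definition word (n : nat) := seq 'I_n.

Definition rsubst (n : nat) := 'I_n -> seq (word n).

Definition is_random_substitution n (theta : rsubst n) : Prop :=
  forall a : 'I_n, theta a != [::] /\ (forall u, u \in theta a -> u != [::]).

Definition set_prod n (A B : seq (word n)) : seq (word n) :=
  [seq u ++ v | u <- A, v <- B].

Definition subst_word n (theta : rsubst n) (u : word n) : seq (word n) :=
  foldr (fun a acc => set_prod (theta a) acc) [:: [::]] u.

Definition subst_set n (theta : rsubst n) (A : seq (word n)) : seq (word n) :=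
  flatten [seq subst_word theta u | u <- A].

Definition subst_pow n (theta : rsubst n) (m : nat) (a : 'I_n) : seq (word n) :=
  iter m (subst_set theta) [:: [:: a]].

Definition card_pow n (theta : rsubst n) (m : nat) (a : 'I_n) : nat :=
  size (undup (subst_pow theta m a)).

Definition abel n (u : word n) : 'I_n -> nat := fun b => count_mem b u.

Definition semi_compatible n (theta : rsubst n) : Prop :=
  forall a : 'I_n, forall u v, u \in theta a -> v \in theta a ->
    forall b : 'I_n, abel u b = abel v b.

(* substitution matrix M_ij = |u|_{a_i} for any u in theta(a_j)
   (we take the first listed word) *)
Definition subst_matrix n (theta : rsubst n) : 'I_n -> 'I_n -> nat :=
  fun i j => abel (head [::] (theta j)) i.

Definition nmat_mul n (A B : 'I_n -> 'I_n -> nat) : 'I_n -> 'I_n -> nat :=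
  fun i j => \sum_(l < n) A i l * B l j.

Definition nmat_id n : 'I_n -> 'I_n -> nat := fun i j => nat_of_bool (i == j).

Fixpoint nmat_pow n (A : 'I_n -> 'I_n -> nat) (k : nat) : 'I_n -> 'I_n -> nat :=
  match k with
  | 0 => @nmat_id n
  | k'.+1 => nmat_mul (nmat_pow A k') A
  end.

Definition q n (theta : rsubst n) (m : nat) (i : 'I_n) : R :=
  ln (INR (card_pow theta m i)).

Definition qM n (theta : rsubst n) (k p : nat) (j : 'I_n) : R :=
  \big[Rplus/R0]_(i < n) (Rmult (q theta k i) (INR (nmat_pow (subst_matrix theta) p i j))).

(* Main.v *)
Require Import Defs.
From Stdlib Require Import Reals.
From mathcomp Require Import all_boot.
From HB Require Import structures.
Set Implicit Arguments. Unset Strict Implicit. Unset Printing Implicit Defensive.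

Section S.
Variable n : nat.
Implicit Types (A B C : seq (word n)) (phi theta : rsubst n) (u v w : word n).

Lemma mem_sp A B w :
  (w \in set_prod A B) <-> exists u v, [/\ u \in A, v \in B & w = u ++ v].
Proof.
split.
- by case/allpairsP => [[u v] /= [Hu Hv ->]]; exists u, v.
- by case=> u [v [Hu Hv ->]]; apply/allpairsP; exists (u, v).
Qed.

Lemma sp_eqi A A' B B' : A =i A' -> B =i B' -> set_prod A B =i set_prod A' B'.
Proof.
move=> HA HB w; apply/idP/idP => /mem_sp [u [v [Hu Hv ->]]]; apply/mem_sp;
 exists u, v; split => //; by rewrite ?HA ?HB // -?HA -?HB.
Qed.

Lemma sp_assoc A B C : set_prod (set_prod A B) C =i set_prod A (set_prod B C).
Proof.
move=> w; apply/idP/idP => /mem_sp [x [y [Hx Hy ->]]].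
- case/mem_sp: Hx => u [v [Hu Hv ->]]; apply/mem_sp; exists u, (v ++ y).
  split => //; last by rewrite catA. by apply/mem_sp; exists v, y.
- case/mem_sp: Hy => u [v [Hu Hv ->]]; apply/mem_sp; exists (x ++ u), v.
  split => //; last by rewrite catA. by apply/mem_sp; exists x, u.
Qed.

Lemma sp_nil_r A : set_prod A [:: [::]] =i A.
Proof.
move=> w; apply/idP/idP.
- by case/mem_sp => u [v [Hu]]; rewrite inE => /eqP -> ->; rewrite cats0.
- by move=> Hw; apply/mem_sp; exists w, [::]; rewrite cats0 inE.
Qed.

Lemma sp_nil_l A : set_prod [:: [::]] A =i A.
Proof.
move=> w; apply/idP/idP.
- by case/mem_sp => u [v []]; rewrite inE => /eqP -> Hv ->.
- by move=> Hw; apply/mem_sp; exists [::], w; rewrite inE.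
Qed.

Lemma sw_cat phi u v :
  subst_word phi (u ++ v) =i set_prod (subst_word phi u) (subst_word phi v).
Proof.
elim: u => [|a u IH] /=.
- by move=> w; rewrite sp_nil_l.
- move=> w; rewrite sp_assoc; apply: sp_eqi => // x; by rewrite IH.
Qed.

Lemma mem_ss phi A w :
  (w \in subst_set phi A) <-> exists u, u \in A /\ w \in subst_word phi u.
Proof.
split.
- case/flattenP => s /mapP [u Hu ->] Hw; by exists u.
- case=> u [Hu Hw]; apply/flattenP; exists (subst_word phi u) => //.
  by apply/mapP; exists u.
Qed.

Lemma ss_eqi phi A A' : A =i A' -> subst_set phi A =i subst_set phi A'.
Proof.
move=> H w; apply/idP/idP => /mem_ss [u [Hu Hw]]; apply/mem_ss; exists u;
 by rewrite ?H // -?H.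
Qed.

Lemma ss_sp phi A B :
  subst_set phi (set_prod A B) =i set_prod (subst_set phi A) (subst_set phi B).
Proof.
move=> w; apply/idP/idP.
- case/mem_ss => x [/mem_sp [u [v [Hu Hv ->]]]]; rewrite sw_cat.
  case/mem_sp => y [z [Hy Hz ->]]; apply/mem_sp; exists y, z; split => //;
  by apply/mem_ss; eauto.
- case/mem_sp => y [z [/mem_ss [u [Hu Hy]] /mem_ss [v [Hv Hz]] ->]].
  apply/mem_ss; exists (u ++ v); split; first by apply/mem_sp; exists u, v.
  by rewrite sw_cat; apply/mem_sp; exists y, z.
Qed.

Lemma ss_sw theta phi v :
  subst_set theta (subst_word phi v) =i
  subst_word (fun b => subst_set theta (phi b)) v.
Proof.
elim: v => [|a v IH] /=.
- by move=> w; rewrite /subst_set /= ?cats0.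
- move=> w; rewrite ss_sp; apply: sp_eqi => // x; by rewrite IH.
Qed.

Lemma ss_ss theta phi A :
  subst_set theta (subst_set phi A) =i
  subst_set (fun b => subst_set theta (phi b)) A.
Proof.
move=> w; apply/idP/idP.
- case/mem_ss => x [/mem_ss [u [Hu Hx]] Hw]; apply/mem_ss; exists u; split => //.
  by rewrite -ss_sw; apply/mem_ss; exists x.
- case/mem_ss => u [Hu]; rewrite -ss_sw => /mem_ss [x [Hx Hw]].
  apply/mem_ss; exists x; split => //; by apply/mem_ss; exists u.
Qed.

Lemma sw_id v : subst_word (fun b : 'I_n => [:: [:: b]]) v =i [:: v].
Proof.
elim: v => [|a v IH] //= w; apply/idP/idP.
- case/mem_sp => x [y []]; rewrite inE => /eqP -> ; rewrite IH inE => /eqP -> ->.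
  by rewrite inE.
- rewrite inE => /eqP ->; apply/mem_sp; exists [:: a], v; by rewrite IH !inE.
Qed.

Lemma ss_id A : subst_set (fun b : 'I_n => [:: [:: b]]) A =i A.
Proof.
move=> w; apply/idP/idP.
- by case/mem_ss => u [Hu]; rewrite sw_id inE => /eqP ->.
- by move=> Hw; apply/mem_ss; exists w; rewrite sw_id inE.
Qed.

Lemma iterS theta k A :
  iter k (subst_set theta) A =i subst_set (subst_pow theta k) A.
Proof.
elim: k => [|k IH] /=.
- by move=> w; rewrite ss_id.
- move=> w; rewrite (ss_eqi _ IH) ss_ss //.
Qed.


Lemma sum_delta (f : 'I_n -> nat) (a : 'I_n) :
  \sum_(l < n) f l * (a == l) = f a.
Proof.
rewrite (bigD1 a) //= eqxx muln1 big1 ?addn0 // => l Hl.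
by rewrite eq_sym (negbTE Hl) muln0.
Qed.

Lemma size_count w : size w = \sum_(i < n) count_mem i w.
Proof.
elim: w => [|a w IH] /=; first by rewrite big1.
rewrite big_split /= IH -add1n; congr (_ + _).
by rewrite -(sum_delta (fun _ => 1) a); apply: eq_bigr => l _; rewrite mul1n.
Qed.

Lemma sw_count phi (g : 'I_n -> 'I_n -> nat) v w :
  (forall b x, x \in phi b -> forall i, count_mem i x = g i b) ->
  w \in subst_word phi v ->
  forall i, count_mem i w = \sum_(l < n) g i l * count_mem l v.
Proof.
move=> H; elim: v w => [|a v IH] w /=.
- by rewrite inE => /eqP -> i; rewrite big1 // => l _; rewrite muln0.
- case/mem_sp => x [y [Hx Hy ->]] i.
  rewrite count_cat (H _ _ Hx) (IH _ Hy).
  under [in RHS]eq_bigr => l _ do rewrite mulnDr.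
  by rewrite big_split /= sum_delta.
Qed.

Lemma pow_count theta (Ht : is_random_substitution theta)
  (Hsc : semi_compatible theta) p :
  forall b w, w \in subst_pow theta p b ->
  forall i, count_mem i w = nmat_pow (subst_matrix theta) p i b.
Proof.
elim: p => [|p IH] b w.
- rewrite /subst_pow /= inE => /eqP -> i /=.
  by rewrite /nmat_id addn0 eq_sym.
- rewrite /subst_pow iterSr iterS => /mem_ss [u [Hu Hw]] i.
  have Hub : u \in theta b.
    case/mem_ss: Hu => u0 [].
    by rewrite inE => /eqP -> /=; rewrite sp_nil_r.
  rewrite (sw_count IH Hw) /= /nmat_mul; apply: eq_bigr => l _; congr (_ * _).
  rewrite /subst_matrix /abel.
  have [Hne _] := Ht b.
  case E : (theta b) Hne => [|x s] // _.
  apply: (Hsc b) => //; by rewrite -E // E /= mem_head.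
Qed.

Definition cardl (T : eqType) (l : seq T) := size (undup l).

Lemma cardl_sub (T : eqType) (A B : seq T) : {subset A <= B} -> cardl A <= cardl B.
Proof.
move=> H; apply: uniq_leq_size (undup_uniq A) _ => x; rewrite !mem_undup; exact: H.
Qed.

Lemma cardl_eqi (T : eqType) (A B : seq T) : A =i B -> cardl A = cardl B.
Proof.
move=> H; apply/eqP; rewrite eqn_leq !cardl_sub // => x; by rewrite H.
Qed.

Lemma cardl_pos (T : eqType) (A : seq T) x : x \in A -> 0 < cardl A.
Proof.
move=> Hx; apply: (@leq_trans (cardl [:: x])) => //; apply: cardl_sub => y.
by rewrite inE => /eqP ->.
Qed.

Lemma cardl_cat (T : eqType) (A B : seq T) : cardl (A ++ B) <= cardl A + cardl B.
Proof.
rewrite /cardl undup_cat size_cat leq_add2r size_filter; exact: count_size.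
Qed.

Lemma card_sp_inj A B :
  (forall u1 u2, u1 \in A -> u2 \in A -> size u1 = size u2) ->
  cardl (set_prod A B) = cardl A * cardl B.
Proof.
move=> H.
have -> : cardl (set_prod A B) = cardl (set_prod (undup A) (undup B)).
  apply: cardl_eqi; apply: sp_eqi => x; by rewrite mem_undup.
rewrite /cardl undup_id ?size_allpairs //.
apply: allpairs_uniq; rewrite ?undup_uniq //.
move=> [x1 y1] [x2 y2] /allpairsP [[a1 b1] /= [Ha1 Hb1 [E1 E2]]].
move=> /allpairsP [[a2 b2] /= [Ha2 Hb2 [E3 E4]]] /= /eqP.
subst; rewrite eqseq_cat; last by apply: H; rewrite -mem_undup.
by case/andP => /eqP -> /eqP ->.
Qed.

Lemma card_flatten (f : word n -> seq (word n)) A X :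
  (forall u, u \in A -> cardl (f u) <= X) ->
  cardl (flatten (map f A)) <= cardl A * X.
Proof.
move=> H.
have -> : cardl (flatten (map f A)) = cardl (flatten (map f (undup A))).
  apply: cardl_eqi => w; apply/flattenP/flattenP => [] [s /mapP [u Hu ->] Hw];
  exists (f u) => //; apply/mapP; exists u => //; by rewrite ?mem_undup // -mem_undup.
rewrite /cardl -/(cardl _).
have : {subset undup A <= A} by move=> x; rewrite mem_undup.
elim: (undup A) => [|x s IH] Hs /=; first by [].
apply: leq_trans (cardl_cat _ _) _; rewrite mulSn leq_add //.
- by apply: H; apply: Hs; rewrite mem_head.
- by apply: IH => y Hy; apply: Hs; rewrite inE Hy orbT.
Qed.

Lemma cardl_sw phi v :
  (forall b x y, x \in phi b -> y \in phi b -> size x = size y) ->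
  cardl (subst_word phi v) = \prod_(b <- v) cardl (phi b).
Proof.
move=> H; elim: v => [|a v IH] /=; first by rewrite big_nil.
by rewrite big_cons card_sp_inj ?IH // => u1 u2; apply: H.
Qed.

Lemma sw_ne phi v : (forall b, exists x, x \in phi b) -> exists w, w \in subst_word phi v.
Proof.
move=> H; elim: v => [|a v [y Hy]] /=; first by exists [::]; rewrite inE.
case: (H a) => x Hx; exists (x ++ y); apply/mem_sp; by exists x, y.
Qed.

Lemma pow_ne theta (Ht : is_random_substitution theta) p b :
  exists w, w \in subst_pow theta p b.
Proof.
elim: p => [|p [w Hw]]; first by exists [:: b]; rewrite inE.
have [y Hy] : exists y, y \in subst_word theta w.
  apply: sw_ne => c; case: (Ht c); case: (theta c) => [|x s] // _ _.
  by exists x; rewrite mem_head.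
exists y; rewrite /subst_pow /=; apply/mem_ss; by exists w.
Qed.

End S.

HB.instance Definition _ := Monoid.isComLaw.Build R R0 Rplus (fun x y z => esym (Rplus_assoc x y z)) Rplus_comm Rplus_0_l.

Lemma sumR_count n (f : 'I_n -> R) (v : word n) :
  \big[Rplus/R0]_(b <- v) f b = \big[Rplus/R0]_(i < n) Rmult (f i) (INR (count_mem i v)).
Proof.
elim: v => [|a v IH].
- by rewrite big_nil big1 // => i _ /=; rewrite Rmult_0_r.
- rewrite big_cons IH /=.
  under [in RHS]eq_bigr => i _ do rewrite plus_INR Rmult_plus_distr_l.
  rewrite big_split /=; congr (Rplus _ _).
  rewrite (bigD1 a) //= eqxx big1 /=.
  + by rewrite Rmult_1_r Rplus_0_r.
  + by move=> i Hi; rewrite eq_sym (negbTE Hi) /= Rmult_0_r.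
Qed.

Lemma ln_prod n (c : 'I_n -> nat) (v : word n) :
  (forall b, 0 < c b) ->
  ln (INR (\prod_(b <- v) c b)) = \big[Rplus/R0]_(b <- v) ln (INR (c b)).
Proof.
move=> H; elim: v => [|a v IH]; first by rewrite !big_nil /= ln_1.
rewrite !big_cons -multE mult_INR ln_mult ?IH //; apply: lt_0_INR; apply/ltP.
- exact: H.
- exact: prodn_gt0.
Qed.

Lemma ln_le' x y : Rlt R0 x -> Rle x y -> Rle (ln x) (ln y).
Proof.
move=> Hx [Hxy|->]; last by apply: Rle_refl.
by apply: Rlt_le; apply: ln_increasing.
Qed.

Lemma INR_pos k : 0 < k -> Rlt R0 (INR k).
Proof. by move=> H; apply: lt_0_INR; apply/ltP. Qed.

Theorem mainTheorem2 (n : nat) (theta : rsubst n)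
  (Htheta : is_random_substitution theta)
  (Hsc : semi_compatible theta) :
  forall k m : nat, (1 <= k)%N -> (k < m)%N ->
  forall j : 'I_n,
    (Rle (qM theta k (m - k) j) (q theta m j)
     /\ Rle (q theta m j) (Rplus (qM theta k (m - k) j) (q theta (m - k) j))).
Proof.
move=> k m _ Hkm j.
set p := m - k.
set thk := subst_pow theta k.
set Ap := subst_pow theta p j.
have Em : subst_pow theta m j =i subst_set thk Ap.
  by rewrite /Ap /thk /subst_pow -{1}(subnKC (ltnW Hkm)) iterD; apply: iterS.
have Hsz : forall b x y, x \in thk b -> y \in thk b -> size x = size y.
  move=> b x y Hx Hy; rewrite !size_count; apply: eq_bigr => i _.
  by rewrite (pow_count Htheta Hsc Hx) (pow_count Htheta Hsc Hy).
have Hcpos : forall b, 0 < cardl (thk b).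
  by move=> b; case: (pow_ne Htheta k b) => x Hx; apply: cardl_pos Hx.
have Hcv : forall v, v \in Ap ->
    ln (INR (cardl (subst_word thk v))) = qM theta k p j.
  move=> v Hv; rewrite cardl_sw // ln_prod // sumR_count /qM.
  apply: eq_bigr => i _; rewrite (pow_count Htheta Hsc Hv) /q; by [].
have [v0 Hv0] := pow_ne Htheta p j.
set X := cardl (subst_word thk v0).
have HXpos : 0 < X.
  have [w Hw] : exists w, w \in subst_word thk v0.
    by apply: sw_ne => b; apply: pow_ne.
  exact: cardl_pos Hw.
have HX : forall v, v \in Ap -> cardl (subst_word thk v) = X.
  move=> v Hv; apply: INR_eq; apply: ln_inv; try apply: INR_pos => //.
  - have [w Hw] : exists w, w \in subst_word thk v.
      by apply: sw_ne => b; apply: pow_ne.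
    exact: cardl_pos Hw.
  - by rewrite Hcv // Hcv.
have EN : card_pow theta m j = cardl (subst_set thk Ap) by apply: cardl_eqi.
have HNlow : X <= card_pow theta m j.
  rewrite EN; apply: cardl_sub => w Hw; apply/mem_ss; by exists v0.
have HNup : card_pow theta m j <= card_pow theta p j * X.
  rewrite EN; apply: card_flatten => u Hu; by rewrite HX.
have HDpos : 0 < card_pow theta p j.
  case: (pow_ne Htheta p j) => x Hx; exact: (cardl_pos Hx).
rewrite -(Hcv v0 Hv0) -/X /q.
split.
- apply: ln_le'; first exact: INR_pos.
  by apply: le_INR; apply/leP.
- apply: (Rle_trans _ (ln (INR (card_pow theta p j * X)))).
  + apply: ln_le'; first by apply: INR_pos; apply: leq_trans HNlow.
    by apply: le_INR; apply/leP.
  + rewrite -multE mult_INR ln_mult; try exact: INR_pos.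
    rewrite Rplus_comm; exact: Rle_refl.
Qed.
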